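(* Let $d\ge1$ and let $\Lambda_1,\dots,\Lambda_d\subset\mathbb{N}$ be arbitrary infinite lacunary sets. Then there exists a function $\psi=(\psi_i)_{1\le i\le d}\in H^2(\mathbb{D},\mathbb{C}^d)$, cyclic for $S^*$, such that $\sigma(\psi_i)=\Lambda_i$ for $1\le i\le d$.
   Context: $H^2(\mathbb{D},\mathbb{C}^d)=H^2\oplus\dots\oplus H^2$ with coordinate functions $\psi_i\in H^2$; $S^*$ acts coordinatewise as the scalar backward shift; $\psi$ is cyclic if the closed span of $\{S^{*n}\psi:n\ge0\}$ is all of $H^2(\mathbb{D},\mathbb{C}^d)$. $\sigma(g)=\{k:\hat g(k)\ne0\}$. A set $\{n_1<n_2<\dots\}$ is lacunary if $n_{k+1}/n_k\ge c>1$ for all $k$. *)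

(* Defs.v *)
From Stdlib Require Import Reals Lra.
Open Scope R_scope.

Record Cx := mkC { re : R; im : R }.
Definition C0 : Cx := mkC 0 0.
Definition Cadd (z w : Cx) : Cx := mkC (re z + re w) (im z + im w).
Definition Csub (z w : Cx) : Cx := mkC (re z - re w) (im z - im w).
Definition Cmul (z w : Cx) : Cx :=
  mkC (re z * re w - im z * im w) (re z * im w + im z * re w).
Definition Cnorm2 (z : Cx) : R := re z * re z + im z * im z.

Fixpoint rsum (n : nat) (f : nat -> R) : R :=
  match n with O => 0 | S m => rsum m f + f m end.
Fixpoint csum (n : nat) (f : nat -> Cx) : Cx :=
  match n with O => C0 | S m => Cadd (csum m f) (f m) end.

(* A scalar H^2 function is identified with its sequence of Taylor
   coefficients g = (\hat g(k))_k; it lies in H^2 iff this is square summable. *)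
Definition inH2 (g : nat -> Cx) : Prop :=
  exists M : R, forall N : nat, rsum N (fun k => Cnorm2 (g k)) <= M.

(* An element of H^2(D, C^d): psi i = coefficient sequence of coordinate i,
   for i < d (values for i >= d are irrelevant). *)
Definition inH2d (d : nat) (psi : nat -> nat -> Cx) : Prop :=
  forall i, (i < d)%nat -> inH2 (psi i).

Definition bshift (psi : nat -> nat -> Cx) : nat -> nat -> Cx :=
  fun i k => psi i (S k).
Definition bshift_pow (n : nat) (psi : nat -> nat -> Cx) : nat -> nat -> Cx :=
  fun i k => psi i (k + n)%nat.

Definition distH2d_sq_le (d : nat) (phi chi : nat -> nat -> Cx) (eps : R) : Prop :=
  forall N : nat,
    rsum d (fun i => rsum N (fun k => Cnorm2 (Csub (phi i k) (chi i k)))) <= eps.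

Definition cyclic_bshift (d : nat) (psi : nat -> nat -> Cx) : Prop :=
  forall phi : nat -> nat -> Cx, inH2d d phi ->
  forall eps : R, 0 < eps ->
  exists (m : nat) (c : nat -> Cx),
    distH2d_sq_le d phi
      (fun i k => csum m (fun n => Cmul (c n) (bshift_pow n psi i k))) eps.

Definition spectrum (g : nat -> Cx) : nat -> Prop := fun k => g k <> C0.

(* Lambda is an infinite lacunary set: Lambda = {n_0 < n_1 < ...} with
   n_{j+1} / n_j >= c > 1 for all j (written multiplicatively). *)
Definition infinite_lacunary (Lam : nat -> Prop) : Prop :=
  exists n : nat -> nat,
    (forall j, (n j < n (S j))%nat) /\
    (forall k, Lam k <-> exists j, n j = k) /\
    exists c : R, 1 < c /\ forall j, c * INR (n j) <= INR (n (S j)).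

(* Main.v *)
Require Import Defs.
From Stdlib Require Import Reals Lra Lia Psatz Arith ClassicalEpsilon.
Open Scope R_scope.

Definition h (n : nat) : R := (/2) ^ n.
Lemma h_pos n : 0 < h n.
Proof. unfold h; apply pow_lt; lra. Qed.
Lemma h_add a b : h (a + b) = h a * h b.
Proof. unfold h; apply pow_add. Qed.
Lemma h_le1 n : h n <= 1.
Proof. induction n; unfold h in *; simpl; [lra|]. assert (0 < (/2)^n) by (apply pow_lt; lra). nra. Qed.
Lemma h_mono a b : (b <= a)%nat -> h a <= h b.
Proof. intros H. replace a with (b + (a - b))%nat by lia. rewrite h_add.
  pose proof (h_pos b); pose proof (h_le1 (a-b)); pose proof (h_pos (a-b)). nra. Qed.
Lemma h_S n : h (S n) = /2 * h n.
Proof. reflexivity. Qed.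

Lemma rsum_le n f g : (forall j, (j < n)%nat -> f j <= g j) -> rsum n f <= rsum n g.
Proof. induction n; simpl; intros H; [lra|]. pose proof (H n ltac:(lia)).
  assert (rsum n f <= rsum n g) by (apply IHn; intros; apply H; lia). lra. Qed.
Lemma rsum_ext n f g : (forall j, (j < n)%nat -> f j = g j) -> rsum n f = rsum n g.
Proof. induction n; simpl; intros H; [lra|]. rewrite (H n ltac:(lia)), IHn; auto. Qed.
Lemma rsum_nonneg n f : (forall j, (j < n)%nat -> 0 <= f j) -> 0 <= rsum n f.
Proof. intros H. replace 0 with (rsum n (fun _ => 0)).
  apply rsum_le; auto. induction n; simpl; auto. rewrite IHn; [lra|]. intros; apply H; lia. Qed.
Lemma rsum_plus n f g : rsum n (fun j => f j + g j) = rsum n f + rsum n g.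
Proof. induction n; simpl; [lra|]. rewrite IHn; lra. Qed.
Lemma rsum_minus n f g : rsum n (fun j => f j - g j) = rsum n f - rsum n g.
Proof. induction n; simpl; [lra|]. rewrite IHn; lra. Qed.
Lemma rsum_scal n c f : rsum n (fun j => c * f j) = c * rsum n f.
Proof. induction n; simpl; [lra|]. rewrite IHn; lra. Qed.
Lemma rsum_const n c : rsum n (fun _ => c) = INR n * c.
Proof. induction n; simpl rsum; [simpl; lra|]. rewrite IHn, S_INR; lra. Qed.
Lemma rsum_h n : rsum n h = 2 - 2 * h n.
Proof. induction n; simpl rsum; [unfold h; simpl; lra|]. rewrite IHn, h_S. lra. Qed.
Lemma rsum_h_le n : rsum n h <= 2.
Proof. rewrite rsum_h; pose proof (h_pos n); lra. Qed.
Lemma rsum_mono n j f : (forall k, 0 <= f k) -> rsum n f <= rsum (n + j) f.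
Proof. intros H; induction j; [rewrite Nat.add_0_r; lra|].
  rewrite Nat.add_succ_r; simpl; pose proof (H (n+j)%nat); lra. Qed.
Lemma rsum_zero_below n g : (forall k, (k < n)%nat -> g k = 0) -> rsum n g = 0.
Proof. intros H; induction n; simpl; auto. rewrite IHn, (H n); [lra|lia|]. intros; apply H; lia. Qed.
Lemma rsum_tail N0 N' f : (forall k, 0 <= f k) ->
  rsum N' (fun q => if (q <? N0)%nat then 0 else f q) <= rsum (N0 + N') f - rsum N0 f.
Proof. intros Hf. set (g := fun q => if (q <? N0)%nat then 0 else f q).
  assert (Hg : forall k, 0 <= g k) by (intros k; unfold g; destruct (k <? N0)%nat; auto; lra).
  assert (E : forall j, rsum (N0 + j) g = rsum (N0 + j) f - rsum N0 f).
  { induction j.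
    - rewrite Nat.add_0_r, rsum_zero_below; [lra|]. intros k Hk; unfold g.
      destruct (Nat.ltb_spec k N0); [auto|lia].
    - rewrite Nat.add_succ_r; simpl. rewrite IHj. unfold g at 1.
      destruct (Nat.ltb_spec (N0 + j) N0); [lia|lra]. }
  rewrite <- E. replace (N0 + N')%nat with (N' + N0)%nat by lia. apply rsum_mono; auto. Qed.

Definition Cone : Cx := mkC 1 0.
Lemma Cnorm2_nonneg z : 0 <= Cnorm2 z.
Proof. unfold Cnorm2; nra. Qed.
Lemma Cnorm2_mul a b : Cnorm2 (Cmul a b) = Cnorm2 a * Cnorm2 b.
Proof. destruct a, b; unfold Cnorm2, Cmul; simpl; ring. Qed.
Lemma Cnorm2_add a b : Cnorm2 (Cadd a b) <= 2 * Cnorm2 a + 2 * Cnorm2 b.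
Proof. destruct a as [a1 a2], b as [b1 b2]; unfold Cnorm2, Cadd; simpl.
  pose proof (Rle_0_sqr (a1 - b1)); pose proof (Rle_0_sqr (a2 - b2)); unfold Rsqr in *; nra. Qed.
Lemma Cnorm2_sub a b : Cnorm2 (Csub a b) <= 2 * Cnorm2 a + 2 * Cnorm2 b.
Proof. destruct a as [a1 a2], b as [b1 b2]; unfold Cnorm2, Csub; simpl.
  pose proof (Rle_0_sqr (a1 + b1)); pose proof (Rle_0_sqr (a2 + b2)); unfold Rsqr in *; nra. Qed.
Lemma Cnorm2_C0 : Cnorm2 C0 = 0.
Proof. unfold Cnorm2, C0; simpl; ring. Qed.
Lemma Cmul_C0_l x : Cmul C0 x = C0.
Proof. destruct x; unfold Cmul, C0; simpl; f_equal; ring. Qed.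
Lemma Cmul_C0_r x : Cmul x C0 = C0.
Proof. destruct x; unfold Cmul, C0; simpl; f_equal; ring. Qed.
Lemma Cmul_C1_l x : Cmul Cone x = x.
Proof. destruct x; unfold Cmul, Cone; simpl; f_equal; ring. Qed.
Lemma Cadd_C0_l x : Cadd C0 x = x.
Proof. destruct x; unfold Cadd, C0; simpl; f_equal; ring. Qed.
Lemma Cadd_C0_r x : Cadd x C0 = x.
Proof. destruct x; unfold Cadd, C0; simpl; f_equal; ring. Qed.
Lemma Csub_C0_r x : Csub x C0 = x.
Proof. destruct x; unfold Csub, C0; simpl; f_equal; ring. Qed.
Lemma Cmul_assoc a b c : Cmul a (Cmul b c) = Cmul (Cmul a b) c.
Proof. destruct a, b, c; unfold Cmul; simpl; f_equal; ring. Qed.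
Lemma Cmul_addr a b c : Cmul a (Cadd b c) = Cadd (Cmul a b) (Cmul a c).
Proof. destruct a, b, c; unfold Cmul, Cadd; simpl; f_equal; ring. Qed.
Lemma Cmul_addl a b c : Cmul (Cadd a b) c = Cadd (Cmul a c) (Cmul b c).
Proof. destruct a, b, c; unfold Cmul, Cadd; simpl; f_equal; ring. Qed.
Lemma Cadd_comm4 a b c d : Cadd (Cadd a b) (Cadd c d) = Cadd (Cadd a c) (Cadd b d).
Proof. destruct a, b, c, d; unfold Cadd; simpl; f_equal; ring. Qed.
Lemma Cadd_sub a b : Cadd b (Csub a b) = a.
Proof. destruct a, b; unfold Cadd, Csub; simpl; f_equal; ring. Qed.
Lemma Csub_Cadd a b c : Csub a (Cadd b c) = Csub (Csub a b) c.
Proof. destruct a, b, c; unfold Cadd, Csub; simpl; f_equal; ring. Qed.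

Lemma csum_ext n f g : (forall j, (j < n)%nat -> f j = g j) -> csum n f = csum n g.
Proof. induction n; simpl; intros H; auto. rewrite (H n ltac:(lia)), IHn; auto. Qed.
Lemma csum_add n f g : csum n (fun j => Cadd (f j) (g j)) = Cadd (csum n f) (csum n g).
Proof. induction n; simpl. unfold Cadd, C0; simpl; f_equal; ring.
  rewrite IHn, Cadd_comm4; auto. Qed.
Lemma csum_scal n a f : csum n (fun j => Cmul a (f j)) = Cmul a (csum n f).
Proof. induction n; simpl. rewrite Cmul_C0_r; auto. rewrite IHn, Cmul_addr; auto. Qed.
Lemma csum_zero n f : (forall j, (j < n)%nat -> f j = C0) -> csum n f = C0.
Proof. induction n; simpl; intros H; auto. rewrite IHn, H; try lia; [apply Cadd_C0_l|]. intros; apply H; lia. Qed.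
Lemma csum_delta n a y : csum n (fun j => if (a =? j)%nat then y j else C0) = if (a <? n)%nat then y a else C0.
Proof. induction n; simpl; auto. rewrite IHn.
  destruct (Nat.eqb_spec a n); destruct (Nat.ltb_spec a n); destruct (Nat.ltb_spec a (S n)); subst;
   try lia; try rewrite Cadd_C0_l; try rewrite Cadd_C0_r; auto. Qed.
Lemma csum_pad m j c x :
  csum (m + j) (fun n => Cmul (if (n <? m)%nat then c n else C0) (x n)) = csum m (fun n => Cmul (c n) (x n)).
Proof. induction j.
  - rewrite Nat.add_0_r. apply csum_ext; intros k Hk. destruct (Nat.ltb_spec k m); [auto|lia].
  - rewrite Nat.add_succ_r; simpl. rewrite IHj. destruct (Nat.ltb_spec (m+j) m); [lia|].
    rewrite Cmul_C0_l, Cadd_C0_r; auto. Qed.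
Lemma csum_norm n f : Cnorm2 (csum n f) <= 2 ^ n * rsum n (fun j => Cnorm2 (f j)).
Proof. induction n; simpl. rewrite Cnorm2_C0; lra.
  pose proof (Cnorm2_add (csum n f) (f n)).
  assert (0 <= rsum n (fun j => Cnorm2 (f j))) by (apply rsum_nonneg; intros; apply Cnorm2_nonneg).
  assert (1 <= 2 ^ n) by (apply pow_R1_Rle; lra). pose proof (Cnorm2_nonneg (f n)). nra. Qed.

Fixpoint Lf (d : nat) (E : nat -> nat -> nat) (t : nat) : nat :=
  match t with
  | O => E (0 mod d)%nat O
  | S s => E (S s mod d)%nat (2 * Lf d E s + s + 5)%nat
  end.

Definition Egood (d : nat) (Lam : nat -> nat -> Prop) (E : nat -> nat -> nat) : Prop :=
  forall i, (i < d)%nat -> (forall j, (E i j < E i (S j))%nat) /\ (forall j, Lam i (E i j)).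

Lemma E_ge (f : nat -> nat) : (forall j, (f j < f (S j))%nat) -> forall j, (j <= f j)%nat.
Proof. intros H j; induction j; [lia|]. specialize (H j); lia. Qed.

Lemma L_step d Lam E s : (1 <= d)%nat -> Egood d Lam E ->
  (2 * Lf d E s + s + 5 <= Lf d E (S s))%nat.
Proof. intros Hd HE. simpl Lf at 2. assert (S s mod d < d)%nat by (apply Nat.mod_upper_bound; lia).
  destruct (HE _ H) as [H1 _]. apply (E_ge _ H1). Qed.

Lemma L_ge d Lam E t : (1 <= d)%nat -> Egood d Lam E -> (3 * t <= Lf d E t)%nat.
Proof. intros Hd HE; induction t; [lia|]. pose proof (L_step d Lam E t Hd HE); lia. Qed.

Lemma L_gap d Lam E t' t : (1 <= d)%nat -> Egood d Lam E -> (t' < t)%nat ->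
  (Lf d E t' + t + 4 <= Lf d E t)%nat.
Proof. intros Hd HE; induction t; intros H; [lia|].
  pose proof (L_step d Lam E t Hd HE).
  destruct (Nat.eq_dec t' t); [subst; lia|]. specialize (IHt ltac:(lia)); lia. Qed.

Lemma L_lam d Lam E t : (1 <= d)%nat -> Egood d Lam E -> Lam (t mod d)%nat (Lf d E t).
Proof. intros Hd HE. assert (t mod d < d)%nat by (apply Nat.mod_upper_bound; lia).
  destruct (HE _ H) as [_ H2]. destruct t; simpl; apply H2. Qed.

Definition leader d E (i p : nat) : Prop := exists t, Lf d E t = p /\ (t mod d)%nat = i.

Definition psi d (Lam : nat -> nat -> Prop) E (i p : nat) : Cx :=
  if excluded_middle_informative (leader d E i p) then mkC (h p) 0
  else if excluded_middle_informative (Lam i p) then mkC (h (2 * p)) 0 else C0.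

Lemma psi_bound d Lam E i p : Cnorm2 (psi d Lam E i p) <= h p.
Proof. unfold psi. pose proof (h_pos p).
  destruct (excluded_middle_informative _).
  - unfold Cnorm2; cbn [re im]. pose proof (h_le1 p). rewrite Rmult_0_l, Rplus_0_r.
    rewrite <- (Rmult_1_r (h p)) at 3. apply Rmult_le_compat_l; lra.
  - destruct (excluded_middle_informative _).
    + unfold Cnorm2; cbn [re im]. pose proof (h_mono (2*p) p ltac:(lia)). pose proof (h_le1 (2*p)).
      pose proof (h_pos (2*p)). rewrite Rmult_0_l, Rplus_0_r.
      rewrite <- (Rmult_1_r (h p)). apply Rmult_le_compat; lra.
    + rewrite Cnorm2_C0; lra. Qed.

Lemma psi_H2 d Lam E : inH2d d (psi d Lam E).
Proof. intros i _. exists 2. intros N. eapply Rle_trans; [|apply (rsum_h_le N)].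
  apply rsum_le; intros; apply psi_bound. Qed.

Lemma psi_spec d Lam E : (1 <= d)%nat -> Egood d Lam E ->
  forall i, (i < d)%nat -> forall k, spectrum (psi d Lam E i) k <-> Lam i k.
Proof. intros Hd HE i Hi k. unfold spectrum, psi. split.
  - destruct (excluded_middle_informative _) as [[t [Ht Hm]]|].
    + intros _. subst. apply L_lam; auto.
    + destruct (excluded_middle_informative _); auto. intros []; auto.
  - intros Hl. destruct (excluded_middle_informative _).
    + intros He; injection He as He1; pose proof (h_pos k); lra.
    + destruct (excluded_middle_informative _); [|contradiction].
      intros He; injection He as He1; pose proof (h_pos (k + (k+0))); lra. Qed.

Definition dlt d E (t i' q k : nat) : Cx :=
  if ((i' =? t mod d)%nat && (q =? k)%nat)%bool then mkC (h (Lf d E t)) 0 else C0.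

Lemma key d Lam E t k i' q : (1 <= d)%nat -> Egood d Lam E -> (k <= t)%nat ->
  Cnorm2 (Csub (psi d Lam E i' (q + (Lf d E t - k))) (dlt d E t i' q k))
   <= h t * h (2 * Lf d E t) * h q.
Proof. intros Hd HE Hk. pose proof (L_ge d Lam E t Hd HE) as Hg.
  assert (Hpos : 0 < h t * h (2 * Lf d E t) * h q).
  { pose proof (h_pos t); pose proof (h_pos (2 * Lf d E t)); pose proof (h_pos q).
    apply Rmult_lt_0_compat; [apply Rmult_lt_0_compat|]; auto. }
  rewrite <- !h_add. set (p := (q + (Lf d E t - k))%nat).
  unfold dlt. destruct (Nat.eqb_spec i' (t mod d)); destruct (Nat.eqb_spec q k); simpl.
  -
    assert (Hl : leader d E i' p) by (exists t; split; [unfold p; lia|auto]).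
    unfold psi. destruct (excluded_middle_informative _); [|contradiction].
    replace p with (Lf d E t) by (unfold p; lia).
    unfold Cnorm2, Csub; cbn [re im]. replace (h (Lf d E t) - h (Lf d E t)) with 0 by ring.
    match goal with |- _ <= h ?x => pose proof (h_pos x) end; lra.
  - rewrite Csub_C0_r. unfold psi. destruct (excluded_middle_informative _) as [[t' [Ht' Hm]]|].
    + assert (t < t')%nat.
      { destruct (Nat.lt_total t' t) as [Hlt|[Heq|Hgt]]; auto.
        - pose proof (L_gap d Lam E t' t Hd HE Hlt). unfold p in Ht'. lia.
        - subst t'. unfold p in Ht'. lia. }
      pose proof (L_gap d Lam E (S t) t' Hd HE) as G.
      assert (Lf d E (S t) <= Lf d E t')%nat by (destruct (Nat.eq_dec (S t) t'); [subst; lia|specialize (G ltac:(lia)); lia]).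
      pose proof (L_step d Lam E t Hd HE).
      unfold Cnorm2; cbn [re im]. rewrite Rmult_0_l, Rplus_0_r, <- h_add. apply h_mono. unfold p in *; lia.
    + destruct (excluded_middle_informative _).
      * unfold Cnorm2; cbn [re im]. rewrite Rmult_0_l, Rplus_0_r, <- h_add. apply h_mono. unfold p in *; lia.
      * rewrite Cnorm2_C0. match goal with |- _ <= h ?x => pose proof (h_pos x) end; lra.
  - rewrite Csub_C0_r. unfold psi. destruct (excluded_middle_informative _) as [[t' [Ht' Hm]]|].
    + assert (t < t')%nat.
      { destruct (Nat.lt_total t' t) as [Hlt|[Heq|Hgt]]; auto.
        - pose proof (L_gap d Lam E t' t Hd HE Hlt). unfold p in Ht'. lia.
        - subst t'. congruence. }
      pose proof (L_gap d Lam E (S t) t' Hd HE) as G.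
      assert (Lf d E (S t) <= Lf d E t')%nat by (destruct (Nat.eq_dec (S t) t'); [subst; lia|specialize (G ltac:(lia)); lia]).
      pose proof (L_step d Lam E t Hd HE).
      unfold Cnorm2; cbn [re im]. rewrite Rmult_0_l, Rplus_0_r, <- h_add. apply h_mono. unfold p in *; lia.
    + destruct (excluded_middle_informative _).
      * unfold Cnorm2; cbn [re im]. rewrite Rmult_0_l, Rplus_0_r, <- h_add. apply h_mono. unfold p in *; lia.
      * rewrite Cnorm2_C0. match goal with |- _ <= h ?x => pose proof (h_pos x) end; lra.
  - rewrite Csub_C0_r. unfold psi. destruct (excluded_middle_informative _) as [[t' [Ht' Hm]]|].
    + assert (t < t')%nat.
      { destruct (Nat.lt_total t' t) as [Hlt|[Heq|Hgt]]; auto.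
        - pose proof (L_gap d Lam E t' t Hd HE Hlt). unfold p in Ht'. lia.
        - subst t'. congruence. }
      pose proof (L_gap d Lam E (S t) t' Hd HE) as G.
      assert (Lf d E (S t) <= Lf d E t')%nat by (destruct (Nat.eq_dec (S t) t'); [subst; lia|specialize (G ltac:(lia)); lia]).
      pose proof (L_step d Lam E t Hd HE).
      unfold Cnorm2; cbn [re im]. rewrite Rmult_0_l, Rplus_0_r, <- h_add. apply h_mono. unfold p in *; lia.
    + destruct (excluded_middle_informative _).
      * unfold Cnorm2; cbn [re im]. rewrite Rmult_0_l, Rplus_0_r, <- h_add. apply h_mono. unfold p in *; lia.
      * rewrite Cnorm2_C0. match goal with |- _ <= h ?x => pose proof (h_pos x) end; lra.
Qed.

Definition Comb (P : nat -> nat -> Cx) (v : nat -> nat -> Cx) : Prop :=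
  exists m c, forall i q, v i q = csum m (fun n => Cmul (c n) (P i (q + n)%nat)).

Lemma comb_shift P a : Comb P (fun i q => P i (q + a)%nat).
Proof. exists (S a), (fun n => if (n =? a)%nat then Cone else C0). intros i q. simpl.
  rewrite csum_zero. rewrite Nat.eqb_refl, Cmul_C1_l, Cadd_C0_l; auto.
  intros j Hj. destruct (Nat.eqb_spec j a); [lia|]. apply Cmul_C0_l. Qed.

Lemma comb_scal P s v : Comb P v -> Comb P (fun i q => Cmul s (v i q)).
Proof. intros [m [c H]]. exists m, (fun n => Cmul s (c n)). intros i q. rewrite H, <- csum_scal.
  apply csum_ext; intros; apply Cmul_assoc. Qed.

Lemma comb_add P v w : Comb P v -> Comb P w -> Comb P (fun i q => Cadd (v i q) (w i q)).
Proof. intros [m1 [c1 H1]] [m2 [c2 H2]].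
  exists (m1 + m2)%nat, (fun n => Cadd (if (n <? m1)%nat then c1 n else C0) (if (n <? m2)%nat then c2 n else C0)).
  intros i q. rewrite H1, H2.
  rewrite <- (csum_pad m1 m2 c1 (fun n => P i (q + n)%nat)).
  rewrite <- (csum_pad m2 m1 c2 (fun n => P i (q + n)%nat)).
  rewrite (Nat.add_comm m2 m1), <- csum_add. apply csum_ext; intros; symmetry; apply Cmul_addl. Qed.

Lemma comb_csum P n (G : nat -> nat -> nat -> Cx) : (forall j, (j < n)%nat -> Comb P (G j)) ->
  Comb P (fun i q => csum n (fun j => G j i q)).
Proof. induction n; intros H.
  - exists O, (fun _ => C0). intros; reflexivity.
  - simpl. apply comb_add; [apply IHn; intros; apply H; lia| apply H; lia]. Qed.

Lemma unif_bound n (f : nat -> nat -> Cx) : (forall i, (i < n)%nat -> inH2 (f i)) ->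
  exists M, 0 <= M /\ forall i, (i < n)%nat -> forall N, rsum N (fun k => Cnorm2 (f i k)) <= M.
Proof. induction n; intros H.
  - exists 0; split; [lra|]; intros; lia.
  - destruct IHn as [M1 [HM1 H1]]; [intros; apply H; lia|].
    destruct (H n ltac:(lia)) as [M2 H2]. exists (M1 + Rabs M2). split.
    + pose proof (Rabs_pos M2); lra.
    + intros i Hi N. pose proof (Rabs_pos M2); pose proof (RRle_abs M2).
      destruct (Nat.eq_dec i n); [subst; specialize (H2 N); lra|].
      specialize (H1 i ltac:(lia) N); lra. Qed.

Lemma Cnorm2_le_rsum f k : Cnorm2 (f k) <= rsum (S k) (fun j => Cnorm2 (f j)).
Proof. simpl. assert (0 <= rsum k (fun j => Cnorm2 (f j))) by (apply rsum_nonneg; intros; apply Cnorm2_nonneg). lra. Qed.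

Lemma Cinv_mul A : A <> 0 -> Cmul (mkC (/ A) 0) (mkC A 0) = Cone.
Proof. intros. unfold Cmul, Cone; cbn [re im]. f_equal; field; auto. Qed.
Lemma Cmul_C1_r x : Cmul x Cone = x.
Proof. destruct x; unfold Cmul, Cone; simpl; f_equal; ring. Qed.
Lemma Csub_diag x : Csub x x = C0.
Proof. destruct x; unfold Csub, C0; simpl; f_equal; ring. Qed.

Lemma cyc d Lam E : (1 <= d)%nat -> Egood d Lam E -> cyclic_bshift d (psi d Lam E).
Proof.
  intros Hd HE phi Hphi eps Heps.
  set (P := psi d Lam E).
  destruct (unif_bound d phi Hphi) as [M [HM0 HM]].
  assert (Hpt : forall i k, (i < d)%nat -> Cnorm2 (phi i k) <= M).
  { intros i k Hi. eapply Rle_trans; [apply Cnorm2_le_rsum|]. apply HM; auto. }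
  set (F := fun N => rsum d (fun i => rsum N (fun k => Cnorm2 (phi i k)))).
  assert (Fg : Un_growing F).
  { intros N; unfold F; apply rsum_le; intros; simpl. pose proof (Cnorm2_nonneg (phi j N)); lra. }
  assert (Fb : has_ub F).
  { exists (INR d * M). intros x [N ->]. unfold F. rewrite <- rsum_const. apply rsum_le; intros; apply HM; auto. }
  destruct (growing_cv F Fg Fb) as [l Hl].
  destruct (Hl (eps / 4) ltac:(lra)) as [N0 HN0].
  assert (Htail : forall N', F (N0 + N')%nat - F N0 < eps / 4).
  { intros N'. pose proof (growing_ineq F l Fg Hl (N0 + N')%nat). specialize (HN0 N0 ltac:(lia)).
    unfold Rdist in HN0. apply Rabs_def2 in HN0. lra. }
  set (C := 4 * INR d * (2 ^ d * (INR d * (2 ^ N0 * (INR N0 * M))))).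
  assert (HC : 0 <= C).
  { unfold C. pose proof (pos_INR d); pose proof (pos_INR N0).
    assert (0 < 2 ^ d) by (apply pow_lt; lra). assert (0 < 2 ^ N0) by (apply pow_lt; lra).
    repeat (apply Rmult_le_pos; try lra). }
  destruct (pow_lt_1_zero (/2) ltac:(rewrite Rabs_pos_eq; lra) (eps / (4 * (C + 1)))) as [T HT].
  { apply Rdiv_lt_0_compat; lra. }
  set (t := fun i => ((T + N0 + 1) * d + i)%nat).
  assert (Ht_ge : forall i, (T + N0 + 1 <= t i)%nat) by (intros; unfold t; nia).
  assert (Ht_mod : forall i, (i < d)%nat -> (t i mod d = i)%nat).
  { intros i Hi. unfold t. rewrite Nat.add_comm, Nat.Div0.mod_add. apply Nat.mod_small; auto. }
  set (A := fun i => h (Lf d E (t i))).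
  assert (HA : forall i, A i <> 0) by (intros i; pose proof (h_pos (Lf d E (t i))); unfold A; lra).
  set (s := fun i k => Cmul (phi i k) (mkC (/ A i) 0)).
  set (Q := fun i' q => csum d (fun i => csum N0 (fun k => Cmul (s i k) (P i' (q + (Lf d E (t i) - k))%nat)))).
  assert (HQ : Comb P Q).
  { apply comb_csum; intros i _. apply comb_csum; intros k _. apply comb_scal. apply comb_shift. }
  destruct HQ as [m [c Hc]]. exists m, c.
  set (hT := h T).
  assert (HhT : hT < eps / (4 * (C + 1))).
  { specialize (HT T ltac:(lia)). rewrite Rabs_pos_eq in HT; [exact HT|]. pose proof (h_pos T); unfold h in *; lra. }
  set (B := 2 ^ d * (INR d * (2 ^ N0 * (INR N0 * (M * hT))))).
  assert (Hpw : forall i' q, (i' < d)%nat ->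
     Cnorm2 (Csub (phi i' q) (Q i' q)) <= 2 * (if (q <? N0)%nat then 0 else Cnorm2 (phi i' q)) + 2 * (B * h q)).
  { intros i' q Hi'.
    set (D := csum d (fun i => csum N0 (fun k => Cmul (s i k) (dlt d E (t i) i' q k)))).
    set (Er := csum d (fun i => csum N0 (fun k => Cmul (s i k) (Csub (P i' (q + (Lf d E (t i) - k))%nat) (dlt d E (t i) i' q k))))).
    assert (HQD : Q i' q = Cadd D Er).
    { unfold Q, D, Er. rewrite <- csum_add. apply csum_ext; intros i _. rewrite <- csum_add.
      apply csum_ext; intros k _. rewrite <- Cmul_addr, Cadd_sub. reflexivity. }
    assert (HD : D = if (q <? N0)%nat then phi i' q else C0).
    { unfold D. rewrite (csum_ext d _ (fun i => if (i' =? i)%nat then (if (q <? N0)%nat then phi i q else C0) else C0)).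
      - rewrite csum_delta. destruct (Nat.ltb_spec i' d); [|lia]. reflexivity.
      - intros i Hi. rewrite (csum_ext N0 _ (fun k => if (i' =? i)%nat then (if (q =? k)%nat then phi i k else C0) else C0)).
        + destruct (Nat.eqb_spec i' i).
          * apply csum_delta.
          * apply csum_zero; auto.
        + intros k Hk. unfold dlt. rewrite (Ht_mod i Hi).
          destruct (Nat.eqb_spec i' i); destruct (Nat.eqb_spec q k); simpl; try apply Cmul_C0_r.
          unfold s. rewrite <- Cmul_assoc. fold (A i). rewrite Cinv_mul; auto. subst; apply Cmul_C1_r. }
    rewrite HQD, Csub_Cadd.
    eapply Rle_trans; [apply Cnorm2_sub|]. apply Rplus_le_compat.
    - rewrite HD. destruct (q <? N0)%nat.
      + rewrite Csub_diag, Cnorm2_C0; lra.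
      + rewrite Csub_C0_r; lra.
    - apply Rmult_le_compat_l; [lra|]. unfold Er.
      eapply Rle_trans; [apply csum_norm|].
      unfold B. rewrite Rmult_assoc. apply Rmult_le_compat_l; [apply pow_le; lra|].
      replace (INR d * (2 ^ N0 * (INR N0 * (M * hT))) * h q) with
        (rsum d (fun _ => 2 ^ N0 * (INR N0 * (M * hT * h q)))) by (rewrite rsum_const; ring).
      apply rsum_le; intros i Hi.
      eapply Rle_trans; [apply csum_norm|].
      apply Rmult_le_compat_l; [apply pow_le; lra|].
      rewrite <- rsum_const. apply rsum_le; intros k Hk.
      rewrite Cnorm2_mul. unfold s. rewrite Cnorm2_mul.
      pose proof (key d Lam E (t i) k i' q Hd HE ltac:(specialize (Ht_ge i); lia)) as K.
      fold P in K.
      assert (Hh2 : h (2 * Lf d E (t i)) = A i * A i) by (unfold A; rewrite <- h_add; f_equal; lia).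
      rewrite Hh2 in K.
      assert (HAi : 0 < A i) by (apply h_pos).
      assert (Hinv : Cnorm2 (mkC (/ A i) 0) = / (A i * A i)).
      { unfold Cnorm2; cbn [re im]. field. lra. }
      rewrite Hinv.
      assert (Htt : h (t i) <= hT) by (apply h_mono; specialize (Ht_ge i); lia).
      pose proof (Hpt i k Hi). pose proof (Cnorm2_nonneg (phi i k)).
      set (e := Cnorm2 (Csub (P i' (q + (Lf d E (t i) - k))%nat) (dlt d E (t i) i' q k))) in *.
      assert (He0 : 0 <= e) by apply Cnorm2_nonneg.
      assert (Hq : 0 < h q) by apply h_pos.
      assert (e * / (A i * A i) <= h (t i) * h q).
      { apply (Rmult_le_reg_r (A i * A i)); [nra|]. field_simplify; [|lra]. nra. }
      assert (0 <= / (A i * A i)) by (apply Rlt_le, Rinv_0_lt_compat; nra).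
      assert (0 < h (t i)) by apply h_pos.
      replace (Cnorm2 (phi i k) * / (A i * A i) * e) with (Cnorm2 (phi i k) * (e * / (A i * A i))) by ring.
      rewrite Rmult_assoc. apply Rmult_le_compat; try nra. }
  unfold distH2d_sq_le. intros N'.
  rewrite (rsum_ext d _ (fun i => rsum N' (fun k => Cnorm2 (Csub (phi i k) (Q i k))))).
  2:{ intros i Hi. apply rsum_ext; intros k Hk. rewrite (Hc i k). reflexivity. }
  apply Rle_trans with (rsum d (fun i => 2 * rsum N' (fun q => if (q <? N0)%nat then 0 else Cnorm2 (phi i q)) + 2 * B * rsum N' h)).
  { apply rsum_le; intros i Hi. rewrite <- rsum_scal, <- rsum_scal, <- rsum_plus. apply rsum_le; intros q _.
    specialize (Hpw i q Hi). lra. }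
  rewrite rsum_plus, rsum_scal.
  assert (H1 : rsum d (fun i => rsum N' (fun q => if (q <? N0)%nat then 0 else Cnorm2 (phi i q))) <= F (N0 + N')%nat - F N0).
  { unfold F. rewrite <- rsum_minus. apply rsum_le; intros i _. apply rsum_tail. intros; apply Cnorm2_nonneg. }
  assert (HB0 : 0 <= B).
  { unfold B, hT. pose proof (pos_INR d); pose proof (pos_INR N0); pose proof (h_pos T).
    assert (0 < 2 ^ d) by (apply pow_lt; lra). assert (0 < 2 ^ N0) by (apply pow_lt; lra).
    repeat (apply Rmult_le_pos; try lra). }
  assert (H2 : rsum d (fun _ => 2 * B * rsum N' h) <= INR d * (4 * B)).
  { rewrite rsum_const. apply Rmult_le_compat_l; [apply pos_INR|]. pose proof (rsum_h_le N'). nra. }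
  assert (H3 : INR d * (4 * B) = C * hT) by (unfold C, B; ring).
  assert (H4 : C * hT <= eps / 4).
  { assert (0 <= hT) by (unfold hT; pose proof (h_pos T); lra).
    apply Rle_trans with (C * (eps / (4 * (C + 1)))); [nra|].
    unfold Rdiv. rewrite Rinv_mult. 
    assert (0 < / (C + 1)) by (apply Rinv_0_lt_compat; lra).
    assert (C * / (C + 1) <= 1).
    { apply (Rmult_le_reg_r (C + 1)); [lra|]. rewrite Rmult_assoc, Rinv_l; lra. }
    assert (0 < eps * / 4) by lra. nra. }
  specialize (Htail N'). lra.
Qed.

Theorem mainTheorem11 (d : nat) (Lam : nat -> nat -> Prop) :
  (1 <= d)%nat ->
  (forall i, (i < d)%nat -> infinite_lacunary (Lam i)) ->
  exists psi : nat -> nat -> Cx,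
    inH2d d psi /\ cyclic_bshift d psi /\
    forall i, (i < d)%nat -> forall k, spectrum (psi i) k <-> Lam i k.
Proof.
  intros Hd HL.
  assert (HEx : forall i, exists f : nat -> nat, (i < d)%nat ->
     (forall j, (f j < f (S j))%nat) /\ (forall j, Lam i (f j))).
  { intros i. destruct (lt_dec i d) as [Hi|Hi].
    - destruct (HL i Hi) as [n [H1 [H2 _]]]. exists n. intros _. split; auto.
      intros j. apply H2. exists j; auto.
    - exists (fun j => j). intros; contradiction. }
  set (E := fun i => proj1_sig (constructive_indefinite_description _ (HEx i))).
  assert (HE : Egood d Lam E).
  { intros i Hi. unfold E. destruct (constructive_indefinite_description _ (HEx i)) as [f Hf]. simpl. auto. }
  exists (psi d Lam E). split; [apply psi_H2|]. split; [apply cyc; auto|]. apply psi_spec; auto.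
Qed.
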